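(* Let $Q:\mathbb C\to\mathbb C$ be a polynomial of odd degree $2g+1$ with $2g$ distinct critical values, and let $f:\mathbb C\to\mathbb C$ be a diffeomorphism such that $Q(f(x))=Q(x)$ for all $x\in\mathbb C$. Then $f(x)=x$ for all $x$. *)

(* Defs.v *)
From HB Require Import structures.
From mathcomp Require Import all_boot all_order all_algebra.
From mathcomp Require Import all_classical all_reals all_analysis.
From mathcomp.real_closed Require Import complex.
Import numFieldNormedType.Exports.
Set Implicit Arguments. Unset Strict Implicit. Unset Printing Implicit Defensive.
Import Order.TTheory GRing.Theory Num.Theory.
Local Open Scope ring_scope.

Definition realify (R : realType) (f : R[i] -> R[i]) : R * R -> R * R :=
  fun p => let: Complex a b := f (Complex p.1 p.2) in (a, b).

Fixpoint Ck (R : realType) (k : nat) (F : R * R -> R * R) : Prop :=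
  match k with
  | O => continuous F
  | S k' => continuous F /\ (forall x v : R * R, derivable F x v)
            /\ (forall v : R * R, Ck k' (fun x => 'D_v F x))
  end.

Definition smooth (R : realType) (F : R * R -> R * R) : Prop := forall k, Ck k F.

Definition diffeomorphism (R : realType) (f : R[i] -> R[i]) : Prop :=
  exists finv : R[i] -> R[i],
    cancel f finv /\ cancel finv f /\
    smooth (realify f) /\ smooth (realify finv).

Definition is_critical_value (R : realType) (Q : {poly R[i]}) (w : R[i]) : Prop :=
  exists z : R[i], root Q^`() z /\ Q.[z] = w.

Definition has_n_critical_values (R : realType) (Q : {poly R[i]}) (n : nat) : Prop :=
  exists s : seq R[i], uniq s /\ size s = n /\
    (forall w, w \in s <-> is_critical_value Q w).

(* Main.v *)
Require Import Defs.
From HB Require Import structures.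
From mathcomp Require Import all_boot all_order all_algebra.
From mathcomp Require Import all_classical all_reals all_analysis.
From mathcomp.real_closed Require Import complex.
From mathcomp Require Import ring lra zify.
From mathcomp Require Import separable.
Import numFieldNormedType.Exports.
Set Implicit Arguments. Unset Strict Implicit. Unset Printing Implicit Defensive.
Import Order.TTheory GRing.Theory Num.Theory.
Local Open Scope ring_scope.


Section P1.
Variable R : realType.
Local Notation C := R[i].
Local Notation N := (@Normc.normc R).
Local Open Scope ring_scope.

Lemma N_ge0 (z : C) : 0 <= N z.
Proof. by case: z => a b; rewrite /Normc.normc sqrtr_ge0. Qed.

Lemma N0 : N 0 = 0.
Proof. exact: Normc.normc0. Qed.

Lemma N_eq0 (z : C) : N z = 0 -> z = 0.
Proof. exact: Normc.eq0_normc. Qed.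

Lemma NM (a b : C) : N (a * b) = N a * N b.
Proof. exact: Normc.normcM. Qed.

Lemma ND (a b : C) : N (a + b) <= N a + N b.
Proof. exact: le_normcD. Qed.

Lemma NN (a : C) : N (- a) = N a.
Proof. exact: normcN. Qed.

Lemma NB (a b : C) : N (a - b) = N (b - a).
Proof. by rewrite -NN opprB. Qed.

Lemma N_gt0 (z : C) : z != 0 -> 0 < N z.
Proof.
move=> nz; rewrite lt_neqAle N_ge0 andbT; apply/eqP => h.
by move: nz; rewrite (N_eq0 (esym h)) eqxx.
Qed.

Lemma N_real (t : R) : N (t%:C)%C = `|t|.
Proof. by rewrite /Normc.normc /= expr0n /= addr0 sqrtr_sqr. Qed.

Lemma N_cplx (a b : R) : N (Complex a b) <= `|a| + `|b|.
Proof.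
rewrite /Normc.normc -(@ger0_norm _ (`|a| + `|b|)) ?addr_ge0 //.
rewrite -sqrtr_sqr ler_sqrt ?sqr_ge0 //.
have h1 : a ^+ 2 = `|a| ^+ 2 by rewrite real_normK ?num_real.
have h2 : b ^+ 2 = `|b| ^+ 2 by rewrite real_normK ?num_real.
rewrite h1 h2 sqrrD.
have : 0 <= `|a| * `|b| *+ 2 by rewrite mulrn_wge0 // mulr_ge0.
lra.
Qed.

Lemma Re_le (z : C) : `|complex.Re z| <= N z.
Proof.
case: z => a b /=; rewrite /Normc.normc -sqrtr_sqr ler_sqrt; last by rewrite addr_ge0 ?sqr_ge0.
by rewrite lerDl sqr_ge0.
Qed.

Lemma Im_le (z : C) : `|complex.Im z| <= N z.
Proof.
case: z => a b /=; rewrite /Normc.normc -sqrtr_sqr ler_sqrt; last by rewrite addr_ge0 ?sqr_ge0.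
by rewrite lerDr sqr_ge0.
Qed.

End P1.


Section P2.
Variable R : realType.
Local Notation C := R[i].
Local Notation N := (@Normc.normc R).

Definition ccont (h : C -> C) := forall z e, 0 < e ->
  exists2 d, 0 < d & forall w, N (w - z) < d -> N (h w - h z) < e.

Lemma realify_eq (f : C -> C) z :
  realify f (complex.Re z, complex.Im z) = (complex.Re (f z), complex.Im (f z)).
Proof. by case: z => a b; rewrite /realify /=; case: (f _). Qed.

Lemma N_ReIm (v : C) : N v <= `|complex.Re v| + `|complex.Im v|.
Proof. by case: v => a b; apply: N_cplx. Qed.

Lemma ReB (a b : C) : complex.Re (a - b) = complex.Re a - complex.Re b.
Proof. by case: a; case: b. Qed.
Lemma ImB (a b : C) : complex.Im (a - b) = complex.Im a - complex.Im b.
Proof. by case: a; case: b. Qed.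

Lemma realify_ccont (f : C -> C) : continuous (realify f) -> ccont f.
Proof.
move=> hc z e e0.
have e20 : 0 < e / 2 by rewrite divr_gt0.
have := cvgr_dist_lt _ _ (hc (complex.Re z, complex.Im z)) _ e20.
move=> H; have {}H := H (nbhs_filter _).
move: H => /nbhs_normP [d /= d0 hd]; exists d => // w hw.
have := hd (complex.Re w, complex.Im w).
rewrite /= !realify_eq prod_normE /=.
have hw1 := Re_le (z - w); have hw2 := Im_le (z - w).
rewrite ReB in hw1; rewrite ImB in hw2.
rewrite NB in hw.
have -> : Num.max `|complex.Re z - complex.Re w| `|complex.Im z - complex.Im w| < d.
  by rewrite gt_max; apply/andP; split; lra.
move=> /(_ isT); rewrite gt_max => /andP [h1 h2].
have := N_ReIm (f w - f z); rewrite ReB ImB.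
rewrite (distrC (complex.Re (f w))) (distrC (complex.Im (f w))).
lra.
Qed.

End P2.


Section P3.
Variable R : realType.
Local Notation C := R[i].
Local Notation N := (@Normc.normc R).

Lemma N_sum (I : Type) (r : seq I) (P : pred I) (F : I -> C) :
  N (\sum_(i <- r | P i) F i) <= \sum_(i <- r | P i) N (F i).
Proof.
elim: r => [|a r IH]; first by rewrite !big_nil N0.
rewrite !big_cons; case: (P a) => //.
by apply: le_trans (ND _ _) _; rewrite lerD2l.
Qed.

Lemma N_prod (I : Type) (r : seq I) (F : I -> C) :
  N (\prod_(i <- r) F i) = \prod_(i <- r) N (F i).
Proof.
elim: r => [|a r IH]; first by rewrite !big_nil Normc.normc1.
by rewrite !big_cons NM IH.
Qed.

Lemma N_exp (x : C) k : N (x ^+ k) = N x ^+ k.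
Proof.
elim: k => [|k IH]; first by rewrite !expr0 Normc.normc1.
by rewrite !exprS NM IH.
Qed.

Lemma N_expB (a b : C) (M : R) k : N a <= M -> N b <= M ->
  N (a ^+ k - b ^+ k) <= k%:R * M ^+ k.-1 * N (a - b).
Proof.
move=> ha hb; have M0 : 0 <= M by apply: le_trans (N_ge0 a) ha.
elim: k => [|k IH]; first by rewrite subrr N0 mul0r mul0r.
have -> : a ^+ k.+1 - b ^+ k.+1 = a * (a ^+ k - b ^+ k) + (a - b) * b ^+ k.
  by rewrite !exprS; ring.
apply: le_trans (ND _ _) _; rewrite !NM N_exp.
have h1 : N a * N (a ^+ k - b ^+ k) <= M * (k%:R * M ^+ k.-1 * N (a - b)).
  by apply: ler_pM => //; [exact: N_ge0 | exact: N_ge0].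
have h2 : N (a - b) * N b ^+ k <= N (a - b) * M ^+ k.
  apply: ler_pM => //; [exact: N_ge0 | exact: exprn_ge0 (N_ge0 _) | ].
  by apply: lerXn2r => //; rewrite ?nnegrE ?N_ge0.
apply: le_trans (lerD h1 h2) _.
case: k {IH h1 h2} => [|k]; first by rewrite /= !expr0 ?mulr0n ?mul0r ?mulr0 ?add0r ?mulr1 ?mul1r.
rewrite /= -[(k.+2)%:R]natr1 -[(k.+1)%:R]natr1 exprS.
have := N_ge0 (a - b); have := exprn_ge0 k M0; nra.
Qed.

Lemma poly_lip (P : {poly C}) (M : R) : 0 <= M -> exists2 L, 0 <= L &
  forall a b, N a <= M -> N b <= M -> N (P.[a] - P.[b]) <= L * N (a - b).
Proof.
move=> M0.
exists (\sum_(i < size P) N P`_i * (i%:R * M ^+ i.-1)).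
  by apply: sumr_ge0 => i _; apply: mulr_ge0; [exact: N_ge0| rewrite mulr_ge0 ?exprn_ge0].
move=> a b ha hb; rewrite !horner_coef -sumrB.
apply: le_trans (N_sum _ _ _) _; rewrite mulr_suml; apply: ler_sum => i _.
rewrite -mulrBr NM -mulrA; apply: ler_wpM2l; first exact: N_ge0.
exact: N_expB.
Qed.

Definition Dq (P : {poly C}) (u : C) := (P - P.[u]%:P) %/ ('X - u%:P).

Lemma Dq_fac (P : {poly C}) u : Dq P u * ('X - u%:P) = P - P.[u]%:P.
Proof.
rewrite /Dq divpK // dvdp_XsubCl /root !hornerE subrr //.
Qed.

Lemma Dq_eval (P : {poly C}) u z : (Dq P u).[z] * (z - u) = P.[z] - P.[u].
Proof.
have := congr1 (fun p => p.[z]) (Dq_fac P u).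
by rewrite /= !hornerE.
Qed.

Lemma deriv_fac (S : {poly C}) u : (S * ('X - u%:P))^`().[u] = S.[u].
Proof. by rewrite derivM derivXsubC !hornerE subrr mulr0 add0r ?mulr1. Qed.

Lemma Dq_at (P : {poly C}) u : (Dq P u).[u] = P^`().[u].
Proof.
have -> : P^`() = (Dq P u * ('X - u%:P))^`() by rewrite Dq_fac derivB derivC subr0.
by rewrite deriv_fac.
Qed.

Lemma expand2 (P : {poly C}) u z :
  P.[z] - P.[u] = ((Dq (Dq P u) u).[z] * (z - u) + P^`().[u]) * (z - u).
Proof. by rewrite Dq_eval -Dq_at subrK Dq_eval. Qed.

Lemma H_at (P : {poly C}) u : (Dq (Dq P u) u).[u] *+ 2 = P^`()^`().[u].
Proof.
have e : P^`() = (Dq P u)^`() * ('X - u%:P) + Dq P u.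
  rewrite -{1}(subrK P.[u]%:P P) -Dq_fac derivD derivC addr0 derivM derivXsubC mulr1 //.
rewrite e derivD derivM derivXsubC mulr1 !hornerE subrr mulr0 add0r Dq_at.
by rewrite mulr2n.
Qed.

Lemma lead_Dq (P : {poly C}) u : (1 < size P)%N -> lead_coef (Dq P u) = lead_coef P.
Proof.
move=> hs.
have : lead_coef (Dq P u * ('X - u%:P)) = lead_coef P.
  rewrite Dq_fac lead_coefDl //; rewrite size_opp size_polyC.
  by case: (_ != 0) => /=; apply: leq_ltn_trans hs.
by rewrite lead_coefM lead_coefXsubC mulr1.
Qed.

Lemma size_Dq (P : {poly C}) u : (1 < size P)%N -> size (Dq P u) = (size P).-1.
Proof.
move=> hs.
have hP : size (P - P.[u]%:P) = size P.
  rewrite size_addl // size_opp size_polyC.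
  by case: (_ != 0) => /=; apply: leq_ltn_trans hs.
have nz : Dq P u != 0.
  apply/eqP => h; move: hP; rewrite -Dq_fac h mul0r size_poly0 => h0.
  by move: hs; rewrite -h0.
by rewrite -hP -Dq_fac size_mul ?polyXsubC_eq0 // size_XsubC addn2.
Qed.

End P3.


Section P4.
Variable R : realType.
Local Notation C := R[i].
Local Notation N := (@Normc.normc R).

Lemma N_le_shift (y u : C) : N y <= N (y - u) + N u.
Proof. by have := ND (y - u) u; rewrite subrK. Qed.

Lemma loc_inj (Q : {poly C}) u : Q^`().[u] != 0 ->
  exists2 r, 0 < r & forall y y', N (y - u) < r -> N (y' - u) < r ->
    Q.[y] = Q.[y'] -> y = y'.
Proof.
move=> qn0.
set H := Dq (Dq Q u) u; set q := Q^`().[u].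
have M0 : 0 <= N u + 1 by have := N_ge0 u; lra.
have [L L0 HL] := poly_lip H M0.
set B := N H.[u] + L.
have B0 : 0 <= B by have := N_ge0 H.[u]; rewrite /B; lra.
have k0 : 0 < N q by exact: N_gt0.
set r := Num.min 1 (N q / (2 * (L + 2 * B + 1))).
have r0 : 0 < r by rewrite lt_min ltr01 /= divr_gt0 //; lra.
have r1 : r <= 1 by rewrite ge_min lexx.
have r2 : r * (2 * (L + 2 * B + 1)) <= N q.
  by rewrite -ler_pdivlMr ?ge_min ?lexx ?orbT //; lra.
exists r => // y y' hy hy' hQ.
apply/eqP; apply/negPn/negP => nyy.
have d0 : 0 < N (y - y') by apply: N_gt0; rewrite subr_eq0.
have E : q * (y - y') = - ((H.[y] - H.[y']) * (y - u) ^+ 2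
                    + H.[y'] * (y - y') * ((y - u) + (y' - u))).
  have := expand2 Q u y; have := expand2 Q u y'.
  rewrite -/H -/q hQ => e1 e2.
  have : (Q.[y'] - Q.[u]) - (Q.[y'] - Q.[u]) = 0 by rewrite subrr.
  rewrite {1}e2 e1 => e; apply/eqP; rewrite -subr_eq0 -[X in _ == X]e; apply/eqP; ring.
have hyM : N y <= N u + 1 by have := N_le_shift y u; lra.
have hy'M : N y' <= N u + 1 by have := N_le_shift y' u; lra.
have hHy' : N H.[y'] <= B.
  have hu1 : N u <= N u + 1 by lra.
  have hl := HL y' u hy'M hu1.
  have := ND (H.[y'] - H.[u]) H.[u]; rewrite subrK => hnd.
  have : L * N (y' - u) <= L * 1 by apply: ler_wpM2l => //; lra.
  rewrite /B; lra.
have hHd := HL y y' hyM hy'M.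
have := congr1 N E; rewrite NN NM => eN.
have := ND ((H.[y] - H.[y']) * (y - u) ^+ 2) (H.[y'] * (y - y') * ((y - u) + (y' - u))).
rewrite -eN !NM ?N_exp => hle.
have := ND (y - u) (y' - u) => hs.

have hyu := N_ge0 (y - u); have hy'u := N_ge0 (y' - u).
have hHyy := N_ge0 (H.[y] - H.[y']); have hHy'0 := N_ge0 H.[y'].
have hsum0 := N_ge0 ((y - u) + (y' - u)).
have i1 : N (H.[y] - H.[y']) * (N (y - u) * N (y - u)) <= L * N (y - y') * r.
  have sq : N (y - u) * N (y - u) <= r by nra.
  apply: ler_pM; [exact: hHyy | exact: mulr_ge0 | exact: hHd | exact: sq].
have i2 : N H.[y'] * N (y - y') * N ((y - u) + (y' - u)) <= B * N (y - y') * (2 * r).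
  apply: ler_pM; [exact: mulr_ge0 (N_ge0 _) (N_ge0 _) | exact: hsum0 | | lra].
  apply: ler_pM; [exact: N_ge0 | exact: N_ge0 | exact: hHy' | exact: lexx].
have : N q * N (y - y') <= (L + 2 * B) * r * N (y - y') by nra.
nra.
Qed.

Lemma rigid (Q : {poly C}) (h : C -> C) u : ccont h ->
  (forall z, Q.[h z] = Q.[z]) -> Q^`().[u] != 0 -> h u = u ->
  exists2 d, 0 < d & forall z, N (z - u) < d -> h z = z.
Proof.
move=> hc hQ qn0 hu.
have [r r0 Hr] := loc_inj qn0.
have [d1 d10 Hd1] := hc u r r0.
exists (Num.min r d1); first by rewrite lt_min r0 d10.
move=> z; rewrite lt_min => /andP [z1 z2].
apply: Hr; [ | exact: z1 | exact: hQ].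
by have := Hd1 z z2; rewrite hu.
Qed.

Lemma avoid (T : eqType) (phi : nat -> T) (rs : seq T) : injective phi ->
  exists k, phi k \notin rs.
Proof.
move=> inj.
case: (boolP (all (fun k => phi k \in rs) (iota 0 (size rs).+1))) => [hall|].
  have := @uniq_leq_size _ (map phi (iota 0 (size rs).+1)) rs.
  rewrite map_inj_uniq ?iota_uniq // size_map size_iota ltnn => /(_ isT) h.
  suff : false by [].
  apply: h => z /mapP [k kin ->]; exact: (allP hall).
by case/allPn => k _ hk; exists k.
Qed.

End P4.


Section P5.
Variable R : realType.
Local Notation C := R[i].
Local Notation N := (@Normc.normc R).

Lemma CB (a b c e : R) : (Complex a b : C) - Complex c e = Complex (a - c) (b - e).
Proof. by []. Qed.

Lemma path_fix (Q : {poly C}) (h : C -> C) (rs : seq C) x y :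
  ccont h -> (forall z, Q.[h z] = Q.[z]) ->
  (forall z, Q^`().[z] = 0 -> z \in rs) ->
  Q^`().[x] != 0 -> h x = x -> h y = y.
Proof.
move=> hc hQ hrs qx hx.
have [->|nxy] := eqVneq y x; first done.
set d := y - x.
have dn0 : d != 0 by rewrite subr_eq0.
pose zb b := (b - x) / d.
pose bl := [seq complex.Im (zb b) / (complex.Re (zb b) * (1 - complex.Re (zb b))) | b <- rs].
have natinj : injective (fun k : nat => (k%:R : R)).
  by move=> a b /eqP; rewrite eqr_nat => /eqP.
have [k hk] := avoid bl natinj.
set s : R := k%:R.
pose p (t : R) : C := x + d * Complex t (s * (t * (1 - t))).
have p0 : p 0 = x.
  by rewrite /p mul0r mulr0 (_ : Complex 0 0 = 0) // mulr0 addr0.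
have p1 : p 1 = y.
  by rewrite /p subrr !mulr0 (_ : Complex 1 0 = 1) // mulr1 /d addrC subrK.
have pgood : forall t, 0 <= t < 1 -> Q^`().[p t] != 0.
  move=> t /andP [t0 t1]; have [->|tn0] := eqVneq t 0; first by rewrite p0.
  apply/eqP => hq; have hin := hrs _ hq.
  have hz : zb (p t) = Complex t (s * (t * (1 - t))).
    rewrite /zb /p (_ : x + d * _ - x = d * Complex t (s * (t * (1 - t)))); last by ring.
    by rewrite [d * _]mulrC mulfK.
  have nz : t * (1 - t) != 0.
    by rewrite mulf_neq0 // subr_eq0 eq_sym lt_eqF.
  move: hk; apply/negP/negPn/mapP; exists (p t) => //.
  by rewrite hz /= mulfK.
set K := N d * (1 + `|s|) + 1.
have K0 : 0 < K by have := N_ge0 d; have := normr_ge0 s; rewrite /K; nra.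
have plip : forall t t', 0 <= t <= 1 -> 0 <= t' <= 1 -> N (p t - p t') <= K * `|t - t'|.
  move=> t t' /andP [ta tb] /andP [ta' tb'].
  rewrite /p (_ : x + d * _ - (x + d * _) = d * (Complex t (s * (t * (1 - t))) - Complex t' (s * (t' * (1 - t'))))); last by ring.
  rewrite CB NM.
  rewrite (_ : s * (t * (1 - t)) - s * (t' * (1 - t')) = s * (t - t') * (1 - t - t')); last by ring.
  have hn := N_cplx (t - t') (s * (t - t') * (1 - t - t')).
  rewrite !normrM in hn.
  have h1 : `|1 - t - t'| <= 1 by rewrite ler_norml; apply/andP; split; lra.
  have hd0 := N_ge0 d; have hs0 := normr_ge0 s; have ht0 := normr_ge0 (t - t').
  have : `|s| * `|t - t'| * `|1 - t - t'| <= `|s| * `|t - t'|.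
    by rewrite -[X in _ <= X]mulr1; apply: ler_wpM2l => //; apply: mulr_ge0.
  move=> h2.
  have : N (Complex (t - t') (s * (t - t') * (1 - t - t'))) <= (1 + `|s|) * `|t - t'| by lra.
  move=> h3; rewrite /K.
  apply: le_trans (ler_wpM2l hd0 h3) _; nra.
pose A : set R := fun t => (0 <= t <= 1) /\ forall t', 0 <= t' <= t -> h (p t') = p t'.
have A0 : A 0.
  split; first by rewrite lexx ler01.
  move=> t' /andP [h1 h2]; have -> : t' = 0 by apply/eqP; rewrite eq_le h2 h1.
  by rewrite p0.
have hsA : has_sup A by split; [exists 0 | exists 1 => t [/andP [_ ?] _]].
set sg := sup A.
have sg0 : 0 <= sg := sup_upper_bound hsA A0.
have sg1 : sg <= 1 by apply: ge_sup; [exists 0 | move=> t [/andP [_ ?] _]].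
have down : forall t', 0 <= t' < sg -> h (p t') = p t'.
  move=> t' /andP [a b].
  have sp : 0 < sg - t' by rewrite subr_gt0.
  have [e Ae he] := sup_adherent sp hsA.
  apply: Ae.2; rewrite a /=; move: he; rewrite opprB addrCA subrr addr0 => he.
  exact: ltW.
have fixsg : h (p sg) = p sg.
  have [->|sgn0] := eqVneq sg 0; first by rewrite p0.
  have sgp : 0 < sg by rewrite lt_neqAle eq_sym sgn0 sg0.
  apply/eqP/negPn/negP => nf.
  have eta0 : 0 < N (h (p sg) - p sg) by apply: N_gt0; rewrite subr_eq0.
  set eta := N (h (p sg) - p sg) in eta0.
  have [dl dl0 Hdl] := hc (p sg) (eta / 2) (divr_gt0 eta0 (ltr0Sn _ _)).
  set m0 := Num.min dl (eta / 2).
  have m00 : 0 < m0 by rewrite lt_min dl0 divr_gt0.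
  set m := Num.min sg (m0 / K).
  have m0p : 0 < m by rewrite lt_min sgp divr_gt0.
  have msg : m <= sg by rewrite ge_min lexx.
  have mK : m * K <= m0 by rewrite -ler_pdivlMr // ge_min lexx orbT.
  set t' := sg - m / 2.
  have t'0 : 0 <= t' < sg by apply/andP; split; rewrite /t'; lra.
  have ht' := down t' t'0.
  have hl : N (p t' - p sg) <= K * (m / 2).
    apply: le_trans (plip _ _ _ _) _; first by rewrite /t'; apply/andP; split; lra.
      by apply/andP; split; lra.
    rewrite /t' (_ : sg - m / 2 - sg = - (m / 2)); last by ring.
    by rewrite normrN ger0_norm //; lra.
  have hm0 : m0 <= dl /\ m0 <= eta / 2 by split; rewrite /m0 ge_min lexx ?orbT.
  have hd : N (p t' - p sg) < dl by case: hm0; nra.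
  have he : N (p t' - p sg) < eta / 2 by case: hm0; nra.
  have := Hdl _ hd; rewrite ht' => hh.
  have e3 : h (p sg) - p sg = (h (p sg) - p t') + (p t' - p sg) by ring.
  have := ND (h (p sg) - p t') (p t' - p sg); rewrite -e3 -/eta NB.
  lra.
have Asg : A sg.
  split; first by rewrite sg0 sg1.
  move=> t' /andP [a b]; have [lt|ge] := ltP t' sg; first by apply: down; rewrite a lt.
  by have -> : t' = sg by apply/eqP; rewrite eq_le b ge.
have sgeq1 : sg = 1.
  apply/eqP/negPn/negP => n1.
  have sglt : sg < 1 by rewrite lt_neqAle n1 sg1.
  have qn : Q^`().[p sg] != 0 by apply: pgood; rewrite sg0 sglt.
  have [dl dl0 Hdl] := rigid hc hQ qn fixsg.
  set m := Num.min (1 - sg) (dl / K).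
  have m0p : 0 < m by rewrite lt_min subr_gt0 sglt divr_gt0.
  have m1 : m <= 1 - sg by rewrite ge_min lexx.
  have mK : m * K <= dl by rewrite -ler_pdivlMr // ge_min lexx orbT.
  have : A (sg + m / 2).
    split; first by apply/andP; split; lra.
    move=> t' /andP [a b]; have [lt|ge] := leP t' sg; first by apply: Asg.2; rewrite a lt.
    apply: Hdl.
    apply: le_lt_trans (plip _ _ _ _) _; [by rewrite a /=; lra | by rewrite sg0 sg1 | ].
    rewrite ger0_norm; last by lra.
    nra.
  move=> /(sup_upper_bound hsA); rewrite -/sg; lra.
have := Asg.2 1; rewrite sgeq1 ler01 lexx p1 => H; exact: H.
Qed.

End P5.


Section P6.
Variable R : realType.
Local Notation C := R[i].
Local Notation N := (@Normc.normc R).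

Lemma size_derivQ (Q : {poly C}) : (0 < size Q)%N -> size Q^`() = (size Q).-1.
Proof.
move=> hs.
have Q0 : Q != 0 by rewrite -size_poly_gt0.
apply/eqP; rewrite eqn_leq; apply/andP; split.
  by have := lt_size_deriv Q0; case: (size Q) hs.
move: hs; case eS: (size Q) => [|[|m]] // _.
rewrite ltnNge; apply/negP => hle.
have := nth_default 0 hle; rewrite coef_deriv => /eqP.
rewrite mulrn_eq0 /= => /eqP hc.
have : lead_coef Q = 0 by rewrite lead_coefE eS.
by move/eqP; rewrite lead_coef_eq0 (negbTE Q0).
Qed.

Lemma prod_ge (r : seq C) (F : C -> R) (dl : R) : 0 <= dl ->
  (forall z, z \in r -> dl <= F z) -> dl ^+ size r <= \prod_(z <- r) F z.
Proof.
move=> d0; elim: r => [|a r IH] H; first by rewrite big_nil expr0.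
rewrite big_cons /= exprS; apply: ler_pM => //; first exact: exprn_ge0.
  by apply: H; rewrite mem_head.
by apply: IH => z zr; apply: H; rewrite in_cons zr orbT.
Qed.

Lemma two_to_one (Q : {poly C}) (rs : seq C) c dl :
  (2 < size Q)%N -> (forall z, Q^`().[z] = 0 -> z \in rs) ->
  Q^`().[c] = 0 -> 0 < dl ->
  exists y, exists y', [/\ y != y', N (y - c) < dl, N (y' - c) < dl & Q.[y] = Q.[y']].
Proof.
move=> hs hrs qc dl0.
set d1 := Num.min dl 1.
have d10 : 0 < d1 by rewrite lt_min dl0 ltr01.
have d11 : d1 <= 1 by rewrite ge_min lexx orbT.
have d1d : d1 <= dl by rewrite ge_min lexx.
set Dc := Dq Q c.
have Dcc : Dc.[c] = 0 by rewrite /Dc Dq_at.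
have M0 : 0 <= N c + 1 by have := N_ge0 c; lra.
have [Lc Lc0 HL] := poly_lip Dc M0.
set lc := lead_coef Q.
have lc0 : lc != 0 by rewrite lead_coef_eq0 -size_poly_gt0; apply: ltn_trans hs.
set eps := N lc * d1 ^+ (size Q - 2).
have eps0 : 0 < eps by rewrite mulr_gt0 ?N_gt0 // exprn_gt0.
set t := Num.min d1 (eps / (Lc + 1)).
have t0 : 0 < t by rewrite lt_min d10 divr_gt0 //; lra.
have td : t <= d1 by rewrite ge_min lexx.
have te : t * (Lc + 1) <= eps by rewrite -ler_pdivlMr ?ge_min ?lexx ?orbT //; lra.
have inj : injective (fun k : nat => c + (t / (k.+2)%:R)%:C%C).
  move=> a b /= /addrI /complexI /mulfI.
  move=> /(_ (lt0r_neq0 t0)) /invr_inj /eqP; rewrite eqr_nat => /eqP; by case.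
have [k hk] := avoid rs inj.
set y := c + (t / (k.+2)%:R)%:C%C in hk.
have yc : y - c = (t / (k.+2)%:R)%:C%C by rewrite /y addrC addKr.
have Nyc : N (y - c) = t / (k.+2)%:R by rewrite yc N_real ger0_norm // divr_ge0 // ltW.
have Nyc1 : N (y - c) < t.
  rewrite Nyc ltr_pdivrMr ?ltr0Sn //; rewrite -[X in X < _]mulr1 ltr_pM2l //.
  by rewrite (_ : 1 = 1%:R) // ltr_nat.
have Nyc0 : 0 < N (y - c) by rewrite Nyc divr_gt0 ?ltr0Sn.
have ync : y != c by rewrite -subr_eq0; apply/eqP => h; move: Nyc0; rewrite h N0 ltxx.
have qy : Q^`().[y] != 0 by apply/eqP => /hrs; rewrite (negbTE hk).
set Dy := Dq Q y.
have Dyy : Dy.[y] = Q^`().[y] by rewrite /Dy Dq_at.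
have Dyc : Dy.[c] = Dc.[y].
  apply: (mulIf (_ : c - y != 0)); first by rewrite subr_eq0 eq_sym.
  rewrite /Dy Dq_eval -[c - y]opprB mulrN -/Dc Dq_eval; ring.
have hNDc : N Dc.[y] < eps.
  have hyM : N y <= N c + 1 by have := N_le_shift y c; lra.
  have hcM : N c <= N c + 1 by lra.
  have := HL y c hyM hcM; rewrite Dcc subr0 => h.
  apply: le_lt_trans h _.
  have : Lc * N (y - c) <= Lc * t by apply: ler_wpM2l => //; exact: ltW.
  have : Lc * t < t * (Lc + 1) by nra.
  lra.
have [r hr] := closed_field_poly_normal Dy.
have lDy : lead_coef Dy = lc by rewrite /Dy lead_Dq // ltnW.
have sDy : size Dy = (size Q).-1 by rewrite /Dy size_Dq // ltnW.
have sr : size r = (size Q - 2)%N.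
  move: sDy; rewrite {1}hr size_scale ?lDy // size_prod_XsubC => e.
  by rewrite subn2 -e.
have rootr : forall z, z \in r -> Dy.[z] = 0.
  move=> z zr; rewrite hr hornerZ; have := root_prod_XsubC r z.
  by rewrite zr /root => /eqP ->; rewrite mulr0.
case: (boolP (has (fun z => N (c - z) < d1) r)) => [/hasP [z zr hz] | hn].
  exists y, z; split.
  - apply/eqP => e; move: qy; rewrite -Dyy e rootr // eqxx //.
  - by apply: (lt_le_trans Nyc1); apply: le_trans td d1d.
  - by rewrite NB; apply: lt_le_trans hz d1d.
  - have := Dq_eval Q y z; rewrite -/Dy rootr // mul0r => /eqP.
    by rewrite eq_sym subr_eq0 => /eqP.
exfalso.
have hge : forall z, z \in r -> d1 <= N (c - z).
  by move=> z zr; move/hasPn: hn => /(_ z zr) /=; rewrite -leNgt.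
have eDy : Dy.[c] = lc * \prod_(z <- r) (c - z).
  rewrite {1}hr hornerZ horner_prod lDy; congr (_ * _).
  by apply: eq_bigr => z _; rewrite hornerXsubC.
have := prod_ge (ltW d10) hge; rewrite sr => hp.
have : eps <= N Dy.[c].
  rewrite eDy NM N_prod /eps; apply: ler_wpM2l => //; exact: N_ge0.
rewrite Dyc; lra.
Qed.

End P6.


Section P7.
Variable R : realType.
Local Notation C := R[i].
Local Notation N := (@Normc.normc R).

Lemma ccont_comp (f h : C -> C) : ccont f -> ccont h -> ccont (fun z => f (h z)).
Proof.
move=> hf hh z e e0.
have [d1 d10 H1] := hf (h z) e e0.
have [d2 d20 H2] := hh z d1 d10.
by exists d2 => // w /H2 /H1.
Qed.

Lemma memR (T : eqType) (s : seq T) x y : uniq s -> (y \in rem x s) = (y != x) && (y \in s).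
Proof. by move=> us; rewrite mem_rem_uniq // inE. Qed.

Lemma invol_fix (T : eqType) (phi : T -> T) : (forall z, phi (phi z) = z) ->
  forall r : seq T, uniq r -> odd (size r) -> (forall z, z \in r -> phi z \in r) ->
  exists2 z, z \in r & phi z = z.
Proof.
move=> inv r; have [n] := ubnP (size r); elim: n r => // n IH r hsz ur od cl.
case: r hsz ur od cl => [//|z r0] hsz ur od cl.
set r := z :: r0 in hsz ur od cl *.
have zr : z \in r by rewrite mem_head.
have [e|ne] := eqVneq (phi z) z; first by exists z.
have pzr : phi z \in rem z r by rewrite rem_mem // cl.
set r' := rem (phi z) (rem z r).
have ur1 : uniq (rem z r) by apply: rem_uniq.
have ur' : uniq r' by apply: rem_uniq.
have s1 : size (rem z r) = (size r).-1 by rewrite size_rem.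
have s' : size r' = (size r).-2 by rewrite size_rem // s1.
have s2 : (1 < size r)%N.
  have : (0 < size (rem z r))%N by case: (rem z r) pzr.
  by rewrite s1; case: (size r) => [|[|m]].
have [y yr' hy] : exists2 y, y \in r' & phi y = y.
  apply: IH => //.
  - rewrite s'; move: hsz s2; lia.
  - by move: od; rewrite s'; case: (size r) s2 => [|[|m]] //= _; rewrite negbK.
  - move=> y; rewrite /r' (memR _ _ ur1) (memR _ _ ur) => /andP [ny /andP [nz yr]].
    rewrite (memR _ _ ur1) (memR _ _ ur) cl // andbT.
    apply/andP; split; apply/eqP => h.
      by move: (congr1 phi h); rewrite !inv => h'; move: nz; rewrite h' eqxx.
    by move: ny; rewrite -h inv eqxx.
exists y => //; exact: mem_rem (mem_rem yr').
Qed.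

End P7.


Section P8.
Variable R : realType.
Local Notation C := R[i].
Local Notation N := (@Normc.normc R).

Lemma N2 (x : C) : N (x *+ 2) = N x *+ 2.
Proof. exact: normcMn. Qed.

Lemma three_pts (Q : {poly C}) c : Q^`().[c] = 0 -> (Dq (Dq Q c) c).[c] != 0 ->
  exists2 rho, 0 < rho & forall a b e, N (a - c) < rho -> N (b - c) < rho ->
    N (e - c) < rho -> Q.[a] = Q.[b] -> Q.[b] = Q.[e] -> [|| a == b, b == e | a == e].
Proof.
move=> qc hH.
set H := Dq (Dq Q c) c in hH *.
have k0 : 0 < N H.[c] by exact: N_gt0.
set k := N H.[c] in k0.
have M0 : 0 <= N c + 1 by have := N_ge0 c; lra.
have [L L0 HL] := poly_lip H M0.
have key : forall z, Q.[z] - Q.[c] = H.[z] * (z - c) ^+ 2.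
  by move=> z; rewrite expand2 qc addr0 /H; ring.
set M := 2 * L / k + 1.
have Mp : 0 < M.
  have : 0 <= 2 * L / k by rewrite divr_ge0 //; lra.
  rewrite /M; lra.
set rho := Num.min 1 (Num.min (k / (2 * L + 1)) (1 / (18 * M))).
have rho0 : 0 < rho.
  rewrite lt_min ltr01 lt_min !divr_gt0 //; lra.
have rho1 : rho <= 1 by rewrite ge_min lexx.
have rhoL : rho * (2 * L + 1) <= k.
  have : rho <= k / (2 * L + 1) by rewrite /rho !ge_min lexx !orbT.
  by rewrite ler_pdivlMr //; lra.
have rhoM : rho * (18 * M) <= 1.
  have : rho <= 1 / (18 * M) by rewrite /rho !ge_min lexx !orbT.
  by rewrite ler_pdivlMr //; lra.
have inM : forall z, N (z - c) < rho -> N z <= N c + 1.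
  by move=> z hz; have := N_le_shift z c; lra.
have pair : forall a b, a != b -> N (a - c) < rho -> N (b - c) < rho ->
    Q.[a] = Q.[b] -> N ((a - c) + (b - c)) <= M * N (b - c) ^+ 2.
  move=> a b nab ha hb hQ.
  have e1 : H.[a] * (a - c) ^+ 2 = H.[b] * (b - c) ^+ 2 by rewrite -!key hQ.
  have e2 : (a - b) * ((a - c) + (b - c)) * H.[a] = (b - c) ^+ 2 * (H.[b] - H.[a]).
    by rewrite (_ : (b - c) ^+ 2 * (H.[b] - H.[a]) = H.[b] * (b - c) ^+ 2 - H.[a] * (b - c) ^+ 2);
      [rewrite -e1; ring | ring].
  have e3 := congr1 N e2.
  rewrite [N (_ * H.[a])]NM [N ((a - b) * _)]NM [N ((b - c) ^+ 2 * _)]NM N_exp in e3.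
  have hl := HL b a (inM b hb) (inM a ha).
  have nd0 : 0 < N (a - b) by apply: N_gt0; rewrite subr_eq0.
  have hHa : k / 2 <= N H.[a].
    have hc0 : N (c - c) < rho by rewrite subrr N0.
    have hl2 := HL c a (inM c hc0) (inM a ha).
    have := ND (H.[c] - H.[a]) H.[a]; rewrite subrK -/k => hh.
    rewrite [N (c - a)]NB in hl2.
    have : L * N (a - c) <= L * rho by apply: ler_wpM2l => //; exact: ltW.
    lra.
  have : N ((a - c) + (b - c)) * N H.[a] <= L * N (b - c) ^+ 2.
    have hb2 := N_ge0 (b - c).
    have h4 : N (a - b) * (N ((a - c) + (b - c)) * N H.[a]) <= N (a - b) * (L * N (b - c) ^+ 2).
      rewrite mulrA e3 [N (b - a)]NB in hl *.
      have := exprn_ge0 2 hb2; nra.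
    by rewrite ler_pM2l in h4.
  move=> h5.
  have hs0 := N_ge0 ((a - c) + (b - c)).
  have hb2 := exprn_ge0 2 (N_ge0 (b - c)).
  have : N ((a - c) + (b - c)) * (k / 2) <= L * N (b - c) ^+ 2.
    apply: le_trans h5; apply: ler_wpM2l => //.
  move=> h6.
  have h7 : N ((a - c) + (b - c)) <= 2 * L / k * N (b - c) ^+ 2.
    rewrite -(ler_pM2r (_ : 0 < k / 2)); last by rewrite divr_gt0.
    apply: le_trans h6 _; rewrite le_eqVlt; apply/orP; left; apply/eqP.
    by field; apply/eqP => h; move: k0; rewrite h ltxx.
  apply: le_trans h7 _; apply: ler_wpM2r => //; rewrite /M; lra.
exists rho => // a b e ha hb he hab hbe.
apply/negPn/negP; rewrite !negb_or => /and3P [nab nbe nae].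
have p1 := pair a b nab ha hb hab.
have p2 := pair a e nae ha he (etrans hab hbe).
have p3 := pair b e nbe hb he hbe.
have tri3 : forall x y z : C, N (x + y - z) <= N x + N y + N z.
  move=> x y z; apply: le_trans (ND _ _) _; rewrite NN.
  by have := ND x y; lra.
have ia := tri3 ((a - c) + (b - c)) ((a - c) + (e - c)) ((b - c) + (e - c)).
have ib := tri3 ((a - c) + (b - c)) ((b - c) + (e - c)) ((a - c) + (e - c)).
have ie := tri3 ((a - c) + (e - c)) ((b - c) + (e - c)) ((a - c) + (b - c)).
rewrite (_ : (a - c) + (b - c) + ((a - c) + (e - c)) - ((b - c) + (e - c)) = (a - c) *+ 2) in ia;
  last by rewrite mulr2n; ring.
rewrite (_ : (a - c) + (b - c) + ((b - c) + (e - c)) - ((a - c) + (e - c)) = (b - c) *+ 2) in ib;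
  last by rewrite mulr2n; ring.
rewrite (_ : (a - c) + (e - c) + ((b - c) + (e - c)) - ((a - c) + (b - c)) = (e - c) *+ 2) in ie;
  last by rewrite mulr2n; ring.
rewrite N2 mulr2n in ia; rewrite N2 mulr2n in ib; rewrite N2 mulr2n in ie.
have na := N_ge0 (a - c); have nb := N_ge0 (b - c); have ne := N_ge0 (e - c).
have q1 : N (b - c) ^+ 2 <= rho * N (b - c) by rewrite expr2; nra.
have q2 : N (e - c) ^+ 2 <= rho * N (e - c) by rewrite expr2; nra.
have q3 : M * (N (b - c) ^+ 2 + 2 * N (e - c) ^+ 2) <= M * (rho * (N (b - c) + 2 * N (e - c))).
  apply: ler_wpM2l; [exact: ltW | lra].
have q4 : M * (rho * (N (b - c) + 2 * N (e - c))) <= (N (b - c) + 2 * N (e - c)) / 18.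
  have hx : 0 <= N (b - c) + 2 * N (e - c) by lra.
  have : M * rho <= 1 / 18 by rewrite ler_pdivlMr //; lra.
  nra.
have hS : N (a - c) + N (b - c) + N (e - c) <= 0 by nra.
have ha0 : N (a - c) = 0 by lra.
have hb0 : N (b - c) = 0 by lra.
move: nab; have := N_eq0 ha0; have := N_eq0 hb0.
by move=> /eqP; rewrite subr_eq0 => /eqP -> /eqP; rewrite subr_eq0 => /eqP ->; rewrite eqxx.
Qed.

End P8.


Section P9.
Variable R : realType.
Local Notation C := R[i].
Local Notation N := (@Normc.normc R).

Lemma crit_count (Q : {poly C}) (s rs : seq C) : uniq s -> size s = size rs ->
  (forall w, w \in s <-> is_critical_value Q w) ->
  (forall z, root Q^`() z -> z \in rs) ->
  forall c c', c \in rs -> c' \in rem c rs -> Q.[c'] = Q.[c] -> False.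
Proof.
move=> us ss hs hrs c c' cr c'r e.
have sub : {subset s <= map (fun z => Q.[z]) (rem c rs)}.
  move=> w /hs [z [rz qz]]; have zr := hrs z rz.
  have [ezc | nzc] := eqVneq z c.
    by apply/mapP; exists c' => //; rewrite e -qz ezc.
  by apply/mapP; exists z; [exact: rem_mem | rewrite qz].
have := uniq_leq_size us sub; rewrite size_map size_rem // ss.
have : (0 < size rs)%N by case: (rs) cr.
by case: (size rs) => [|n] //=; rewrite ltnn.
Qed.

Lemma simple_H (Q : {poly C}) rs c :
  Q^`() = lead_coef Q^`() *: \prod_(z <- rs) ('X - z%:P) -> Q^`() != 0 ->
  c \in rs -> c \notin rem c rs -> (Dq (Dq Q c) c).[c] != 0.
Proof.
move=> hq q0 cr ncr.
have ep : \prod_(z <- rs) ('X - z%:P) = ('X - c%:P) * \prod_(z <- rem c rs) ('X - z%:P).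
  by rewrite (perm_big _ (perm_to_rem cr)) big_cons.
set S := lead_coef Q^`() *: \prod_(z <- rem c rs) ('X - z%:P).
have eq : Q^`() = S * ('X - c%:P) by rewrite {1}hq ep /S mulrC scalerAl.
have h : Q^`()^`().[c] = S.[c] by rewrite {1}eq deriv_fac.
have Sc : S.[c] != 0.
  rewrite /S hornerZ mulf_neq0 ?lead_coef_eq0 //.
  by have := root_prod_XsubC (rem c rs) c; rewrite (negbTE ncr) /root => ->.
rewrite -H_at in h; apply/eqP => H0; move: Sc; rewrite -h H0 mul0rn eqxx.
by [].
Qed.

Lemma fiber (Q : {poly C}) w : (1 < size Q)%N -> ~ is_critical_value Q w ->
  exists r, [/\ uniq r, size r = (size Q).-1 & forall z, (z \in r) = (Q.[z] == w)].
Proof.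
move=> hs ncv.
set P := Q - w%:P.
have sP : size P = size Q.
  rewrite /P size_addl // size_opp size_polyC.
  by case: (_ != 0) => /=; apply: leq_ltn_trans hs.
have lP0 : lead_coef P != 0 by rewrite lead_coef_eq0 -size_poly_gt0 sP ltnW.
have [r hr] := closed_field_poly_normal P.
set Pi := \prod_(z <- r) ('X - z%:P) in hr.
have ePz : forall z, Q.[z] - w = lead_coef P * Pi.[z].
  by move=> z; rewrite -hornerZ -hr /P !hornerE.
have memr : forall z, (z \in r) = (Q.[z] == w).
  by move=> z; rewrite -root_prod_XsubC -/Pi /root -(subr_eq0 Q.[z]) ePz mulf_eq0 (negbTE lP0).
exists r; split => //.
- rewrite -separable_prod_XsubC -/Pi unlock /separable_poly coprimep_def.
  apply/negPn/negP => hn; have [z] := closed_rootP _ hn.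
  rewrite root_gcd => /andP [r1 r2]; apply: ncv; exists z; split.
    have e : Q^`() = lead_coef P *: Pi^`() by rewrite -derivZ -hr /P derivB derivC subr0.
    by rewrite /root e hornerZ; move: r2; rewrite /root => /eqP ->; rewrite mulr0.
  by apply/eqP; rewrite -memr -root_prod_XsubC.
- by move: sP; rewrite {1}hr size_scale // size_prod_XsubC => <-.
Qed.

End P9.


Lemma near_pick (R : realType) (rs : seq R[i]) (c : R[i]) (t : R) : 0 < t ->
  exists y, y \notin rs /\ Normc.normc (y - c) < t.
Proof.
move=> t0.
have inj : injective (fun k : nat => c + (t / (k.+2)%:R)%:C%C).
  move=> a b /= /addrI /complexI /mulfI.
  move=> /(_ (lt0r_neq0 t0)) /invr_inj /eqP; rewrite eqr_nat => /eqP; by case.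
have [k hk] := avoid rs inj.
exists (c + (t / (k.+2)%:R)%:C%C); split => //.
rewrite addrC addKr N_real ger0_norm; last by rewrite divr_ge0 // ltW.
rewrite ltr_pdivrMr ?ltr0Sn //; rewrite -[X in X < _]mulr1 ltr_pM2l //.
by rewrite (_ : 1 = 1%:R) // ltr_nat.
Qed.

Theorem mainTheorem8 (R : realType) (g : nat) (Q : {poly R[i]}) (f : R[i] -> R[i]) :
  size Q = (2 * g + 2)%N ->
  has_n_critical_values Q (2 * g)%N ->
  diffeomorphism f ->
  (forall x : R[i], Q.[f x] = Q.[x]) ->
  forall x : R[i], f x = x.
Proof.
move=> hsz [s [us [ss hs]]] [finv [c1 [c2 [sm1 _]]]] hQ.
have hc : ccont f := realify_ccont (sm1 0%N).
have finj : injective f := can_inj c1.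
case: g hsz ss => [|g] hsz ss.
  move=> x.
  have hs1 : size (Dq Q x) = 1%N by rewrite size_Dq hsz.
  have := Dq_eval Q x (f x); rewrite hQ subrr => /eqP; rewrite mulf_eq0 => /orP [h|].
    have : size (Dq Q x) != 1%N by apply/closed_rootP; exists (f x).
    by rewrite hs1.
  by rewrite subr_eq0 => /eqP.
have hs2 : (2 < size Q)%N by rewrite hsz; lia.
have hs1 : (1 < size Q)%N by apply: ltnW.
have sQ' : size Q^`() = (size Q).-1 by rewrite size_derivQ // ltnW.
have q0 : Q^`() != 0 by rewrite -size_poly_gt0 sQ'; case: (size Q) hs1 => [|[|m]].
have [rs hrs] := closed_field_poly_normal Q^`().
have lq0 : lead_coef Q^`() != 0 by rewrite lead_coef_eq0.
have hrs_mem : forall z, root Q^`() z -> z \in rs.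
  move=> z; rewrite {1}hrs /root hornerZ mulf_eq0 (negbTE lq0) /=.
  by rewrite -root_prod_XsubC /root.
have hrs0 : forall z, Q^`().[z] = 0 -> z \in rs by move=> z /eqP; exact: hrs_mem.
have srs : size rs = size s.
  move: sQ'; rewrite {1}hrs size_scale // size_prod_XsubC hsz ss => e.
  by move: e; rewrite addn2 /= => [[]].
move: us srs hs; case: s ss => [|w0 s0] ss us srs hs; first by move: ss => /=; lia.
set s := w0 :: s0 in ss us srs hs.
have [c [rc qcw]] : is_critical_value Q w0 by apply/hs; rewrite mem_head.
have cr := hrs_mem c rc.
have qc : Q^`().[c] = 0 by apply/eqP.
have srs' : size s = size rs by [].
have simple : c \notin rem c rs.
  by apply/negP => h; apply: (crit_count us srs' hs hrs_mem cr h).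
have hH := simple_H hrs q0 cr simple.
have fcq : Q^`().[f c] = 0.
  apply/eqP/negPn/negP => nq.
  have [r r0 Hr] := loc_inj nq.
  have [d d0 Hd] := hc c r r0.
  have [y [y' [nyy hy hy' hQy]]] := two_to_one hs2 hrs0 qc d0.
  have : f y = f y' by apply: Hr; [exact: Hd | exact: Hd | rewrite !hQ].
  by move/finj => e; rewrite e eqxx in nyy.
have fcc : f c = c.
  apply/eqP/negPn/negP => nfc.
  apply: (crit_count us srs' hs hrs_mem cr (c' := f c)) => //.
  by apply: rem_mem => //; apply: hrs0.
have [rho rho0 H3] := three_pts qc hH.
have [d1 d10 Hd1] := hc c rho rho0.
have [d2 d20 Hd2] := hc c d1 d10.
set dl := Num.min rho (Num.min d1 d2).
have dl0 : 0 < dl by rewrite !lt_min rho0 d10 d20.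
have [y [yrs hy]] := near_pick rs c dl0.
have hy1 : Normc.normc (y - c) < rho by apply: lt_le_trans hy _; rewrite ge_min lexx.
have hy2 : Normc.normc (y - c) < d2.
  by apply: lt_le_trans hy _; rewrite !ge_min lexx !orbT.
have fy : Normc.normc (f y - c) < rho by rewrite -{1}fcc; apply: Hd1; apply: lt_le_trans hy _;
  rewrite !ge_min lexx !orbT.
have fy1 : Normc.normc (f y - c) < d1 by rewrite -{1}fcc; apply: Hd2.
have ffy : Normc.normc (f (f y) - c) < rho by rewrite -{1}fcc; apply: Hd1.
have qy0 : Q^`().[y] != 0 by apply/eqP => /hrs0; rewrite (negbTE yrs).
have fx0 : f (f y) = y.
  have := H3 y (f y) (f (f y)) hy1 fy ffy (esym (hQ y)) (esym (hQ (f y))).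
  case/or3P => /eqP e.
  - by rewrite -e -e.
  - by rewrite -e; apply: esym (finj _ _ e).
  - by rewrite -e.
have ff : forall z, f (f z) = z.
  move=> z.
  have hQ2 : forall u, Q.[(fun u => f (f u)) u] = Q.[u] by move=> u /=; rewrite !hQ.
  exact: (@path_fix _ Q (fun z => f (f z)) rs y z (ccont_comp hc hc) hQ2 hrs0 qy0 fx0).
have natinj : injective (fun k : nat => (k%:R : R)%:C%C).
  by move=> a b /complexI /eqP; rewrite eqr_nat => /eqP.
have [k hk] := avoid s natinj.
set w := (k%:R : R)%:C%C in hk.
have ncv : ~ is_critical_value Q w by move/hs => h; rewrite h in hk.
have [r [ur sr memr]] := fiber hs1 ncv.
have od : odd (size r) by rewrite sr hsz mul2n addn2 /= odd_double.
have cl : forall z, z \in r -> f z \in r by move=> z; rewrite !memr hQ.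
have [x1 x1r fx1] := invol_fix ff ur od cl.
have qx1 : Q^`().[x1] != 0.
  apply/eqP => h; apply: ncv; exists x1; split; first by apply/eqP.
  by apply/eqP; rewrite -memr.
by move=> x; exact: (@path_fix _ Q f rs x1 x hc hQ hrs0 qx1 fx1).
Qed.
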